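(* Let $C$ be a localic category. Then the monad $\Gamma C$ of global sections is hyperaffine-unary.
   Context: A monad $T$ on $\mathbf{Set}$: sets $TA$, $\mathrm{return}\,a\in TA$, $\mathbin{\gg\!=}\colon TA\times(TB)^A\to TB$ with the monad laws; $t\gg s:=t\mathbin{\gg\!=}\lambda a.s$. An element $h\in TA$ is hyperaffine if $h\mathbin{\gg\!=}\lambda a.\mathrm{return}\,b=\mathrm{return}\,b$ for every set $B$ and $b\in B$, and $h\mathbin{\gg\!=}\lambda a_1.\,h\mathbin{\gg\!=}\lambda a_2.\mathrm{return}(a_1,a_2)=h\mathbin{\gg\!=}\lambda a.\mathrm{return}(a,a)$. $T$ is hyperaffine-unary if for every set $A$ and $t\in TA$ there is a unique hyperaffine $\bar t\in TA$ with $t=\bar t\mathbin{\gg\!=}\lambda a.(t\gg\mathrm{return}\,a)$. A localic category $C$ is an internal category in $\mathbf{Loc}$ (the opposite of the category of frames) with $C_0,C_1,\sigma,\tau,\iota,\mu$. $A\cdot L$ denotes the $A$-fold coproduct of locales (frame $\mathcal{O}(L)^A$), with injections $\upsilon_a$ and codiagonal $\nabla$. $\Gamma C(A)$ is the set of locale maps $s\colon C_0\to A\cdot C_1$ with $\sigma\circ\nabla\circ s=\mathrm{id}$; it is a monad with $\mathrm{return}\,a=\upsilon_a\circ\iota$ and $s\mathbin{\gg\!=}u$ the composite $C_0\xrightarrow{s}A\cdot C_1\to C_1\times_{C_0}(B\cdot C_1)\cong B\cdot(C_1\times_{C_0}C_1)\xrightarrow{B\cdot\mu}B\cdot C_1$,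 the middle map having components $\nabla$ and $[u(a)]_a\circ(A\cdot\tau)$ (in generalized elements: $c\mapsto(b,g\circ f)$ where $s(c)=(a,f)$ and $u(a)(\tau f)=(b,g)$). *)

(* Defs.v *)
(* Localic categories, presented via frames (Loc = Frm^op).
   A locale map f : X -> Y is represented by its frame homomorphism
   f^* : O(Y) -> O(X). *)
Set Implicit Arguments.
Unset Strict Implicit.

Record Frame := {
  fcar :> Type;
  fle : fcar -> fcar -> Prop;
  ftop : fcar;
  fmeet : fcar -> fcar -> fcar;
  fsup : (fcar -> Prop) -> fcar;
  fle_refl : forall x, fle x x;
  fle_trans : forall x y z, fle x y -> fle y z -> fle x z;
  fle_antisym : forall x y, fle x y -> fle y x -> x = y;
  ftop_max : forall x, fle x ftop;
  fmeet_glb : forall x y z, fle z (fmeet x y) <-> (fle z x /\ fle z y);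
  fsup_lub : forall (S : fcar -> Prop) z, fle (fsup S) z <-> (forall x, S x -> fle x z);
  fdistr : forall x (S : fcar -> Prop),
      fmeet x (fsup S) = fsup (fun z => exists s, S s /\ z = fmeet x s)
}.
Arguments fle {f}. Arguments ftop {f}. Arguments fmeet {f}. Arguments fsup {f}.

Definition img (X Y : Type) (f : X -> Y) (S : X -> Prop) : Y -> Prop :=
  fun y => exists x, S x /\ y = f x.

Definition is_frame_hom (L M : Frame) (f : L -> M) : Prop :=
  f ftop = ftop /\
  (forall x y, f (fmeet x y) = fmeet (f x) (f y)) /\
  (forall S : L -> Prop, f (fsup S) = fsup (img f S)).

(* ---------- Copowers A . L : frame O(L)^A (pointwise) ---------- *)
Definition ptop (A : Type) (L : Frame) : A -> L := fun _ => ftop.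
Definition pmeet (A : Type) (L : Frame) (V W : A -> L) : A -> L :=
  fun a => fmeet (V a) (W a).
Definition psup (A : Type) (L : Frame) (S : (A -> L) -> Prop) : A -> L :=
  fun a => fsup (fun y => exists V, S V /\ y = V a).

(* frame homomorphism O(L)^A -> O(M), i.e. locale map M -> A . L *)
Definition is_frame_hom_pow (A : Type) (L M : Frame) (s : (A -> L) -> M) : Prop :=
  s (@ptop A L) = ftop /\
  (forall V W, s (@pmeet A L V W) = fmeet (s V) (s W)) /\
  (forall S : (A -> L) -> Prop, s (@psup A L S) = fsup (img s S)).

(* ---------- Pullbacks of locales:  Y x_Z Y' via C-ideals ----------
   For locale maps g : Y -> Z (frame map gs : Z -> Y) and h : Y' -> Z
   (frame map hs : Z -> Y'), the frame O(Y x_Z Y') is the frame of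
   C-ideals D of O(Y) x O(Y') (pushout of frames, Picado-Pultr):
   downsets closed under joins in each variable and saturated for the
   relation  gs w (x) 1 ~ 1 (x) hs w.  The generator x (x) y corresponds
   to pi1^* x /\ pi2^* y, and x (x) y <= D iff D x y. *)
Definition Cideal (Z Y Y' : Frame) (gs : Z -> Y) (hs : Z -> Y')
    (D : Y -> Y' -> Prop) : Prop :=
  (forall x y x' y', D x y -> fle x' x -> fle y' y -> D x' y') /\
  (forall (S : Y -> Prop) y, (forall x, S x -> D x y) -> D (fsup S) y) /\
  (forall x (S : Y' -> Prop), (forall y, S y -> D x y) -> D x (fsup S)) /\
  (forall x y w, D (fmeet x (gs w)) y <-> D x (fmeet (hs w) y)).

Definition cgen (Z Y Y' : Frame) (gs : Z -> Y) (hs : Z -> Y')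
    (P : Y -> Y' -> Prop) : Y -> Y' -> Prop :=
  fun x y => forall D, Cideal gs hs D -> (forall a b, P a b -> D a b) -> D x y.

Definition proj1F (Z Y Y' : Frame) (gs : Z -> Y) (hs : Z -> Y') (x : Y) :=
  cgen gs hs (fun a b => a = x /\ b = ftop).
Definition proj2F (Z Y Y' : Frame) (gs : Z -> Y) (hs : Z -> Y') (y : Y') :=
  cgen gs hs (fun a b => a = ftop /\ b = y).

Definition pairF (X Y Y' : Frame) (ps : Y -> X) (qs : Y' -> X)
    (D : Y -> Y' -> Prop) : X :=
  fsup (fun z => exists x y, D x y /\ z = fmeet (ps x) (qs y)).

(* ---------- Localic categories ----------
   C1 x_{C0} C1 is the pullback of  tau (left)  and  sigma (right):
   a generalized element is a pair (f, g) with tau f = sigma g, and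
   mu (f, g) = g o f. *)
Record LocCat := {
  C0 : Frame;
  C1 : Frame;
  sigma : C0 -> C1;
  tau : C0 -> C1;
  iota : C1 -> C0;
  mu : C1 -> (C1 -> C1 -> Prop);    (* mu^* : O(C1) -> O(C1 x_{C0} C1) *)
  sigma_hom : is_frame_hom sigma;
  tau_hom : is_frame_hom tau;
  iota_hom : is_frame_hom iota;
  mu_Cideal : forall v, Cideal tau sigma (mu v);
  mu_top : forall a b, mu ftop a b;
  mu_meet : forall v w a b, mu (fmeet v w) a b <-> (mu v a b /\ mu w a b);
  mu_sup : forall (S : C1 -> Prop) a b,
      mu (fsup S) a b <-> cgen tau sigma (fun x y => exists v, S v /\ mu v x y) a b;
  sigma_iota : forall w, iota (sigma w) = w;
  tau_iota : forall w, iota (tau w) = w;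
  (* sigma o mu = sigma o pi1,  tau o mu = tau o pi2 *)
  sigma_mu : forall w a b, mu (sigma w) a b <-> proj1F tau sigma (sigma w) a b;
  tau_mu : forall w a b, mu (tau w) a b <-> proj2F tau sigma (tau w) a b;
  (* unit laws: mu o <iota o sigma, id> = id,  mu o <id, iota o tau> = id *)
  unit_left : forall v,
      pairF (fun x => sigma (iota x)) (fun y => y) (mu v) = v;
  unit_right : forall v,
      pairF (fun x => x) (fun y => tau (iota y)) (mu v) = v;
  (* associativity, in terms of generalized elements X -> C1 *)
  assoc : forall (X : Frame) (ps qs rs : C1 -> X),
      is_frame_hom ps -> is_frame_hom qs -> is_frame_hom rs ->
      (forall w, ps (tau w) = qs (sigma w)) ->
      (forall w, qs (tau w) = rs (sigma w)) ->
      forall v,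
        pairF (fun x => pairF ps qs (mu x)) rs (mu v)
        = pairF ps (fun y => pairF qs rs (mu y)) (mu v)
}.

Arguments C0 : clear implicits. Arguments C1 : clear implicits.
Arguments sigma : clear implicits. Arguments tau : clear implicits.
Arguments iota : clear implicits. Arguments mu : clear implicits.

Section Gamma.
Variable C : LocCat.

(* a (raw) locale map C0 -> A . C1, via its frame map O(C1)^A -> O(C0) *)
Definition Sec (A : Type) := (A -> C1 C) -> C0 C.

(* s in Gamma C (A):  s is a locale map with  sigma o nabla o s = id *)
Definition inGamma (A : Type) (s : Sec A) : Prop :=
  is_frame_hom_pow s /\ forall w, s (fun _ => sigma C w) = w.

(* return a = upsilon_a o iota *)
Definition ret (A : Type) (a : A) : Sec A := fun V => iota C (V a).

(* s >>= u is the composite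
     C0 --s--> A.C1 --<nabla, [u a]_a o (A.tau)>--> C1 x_{C0} (B.C1)
        --(iso)--> B.(C1 x_{C0} C1) --B.mu--> B.C1.
   Frame maps:
   - B.mu :  V |-> (b |-> mu (V b))
   - the canonical iso  B.(C1 x_{C0} C1) ~ C1 x_{C0} (B.C1)  sends the
     family of C-ideals W to the C-ideal  {(x,Y) | forall b, W b x (Y b)}
   - the pairing <nabla, [u a]_a o (A.tau)> sends a C-ideal E to
     a |-> \/ { x /\ tau (u a Y) | E x Y }. *)
Definition Bmu (B : Type) (V : B -> C1 C) : B -> (C1 C -> C1 C -> Prop) :=
  fun b => mu C (V b).
Definition isoF (B : Type) (W : B -> (C1 C -> C1 C -> Prop))
  : C1 C -> (B -> C1 C) -> Prop :=
  fun x Y => forall b, W b x (Y b).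
Definition midF (A B : Type) (u : A -> Sec B) (E : C1 C -> (B -> C1 C) -> Prop)
  : A -> C1 C :=
  fun a => fsup (fun z => exists x Y, E x Y /\ z = fmeet x (tau C (u a Y))).
Definition bind (A B : Type) (s : Sec A) (u : A -> Sec B) : Sec B :=
  fun V => s (midF u (isoF (Bmu V))).

Definition then_ (A B : Type) (t : Sec A) (s : Sec B) : Sec B :=
  bind t (fun _ => s).

Definition sec_eq (A : Type) (s t : Sec A) : Prop := forall V, s V = t V.

Definition hyperaffine (A : Type) (h : Sec A) : Prop :=
  (forall (B : Type) (b : B), sec_eq (bind h (fun _ => ret b)) (ret b)) /\
  sec_eq (bind h (fun a1 => bind h (fun a2 => ret (a1, a2))))
         (bind h (fun a => ret (a, a))).

Definition hyperaffine_unary : Prop :=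
  forall (A : Type) (t : Sec A), inGamma t ->
    exists tb : Sec A,
      (inGamma tb /\ hyperaffine tb /\
       sec_eq t (bind tb (fun a => then_ t (ret a)))) /\
      forall tb' : Sec A,
        inGamma tb' -> hyperaffine tb' ->
        sec_eq t (bind tb' (fun a => then_ t (ret a))) ->
        sec_eq tb' tb.
End Gamma.

(* Main.v *)
Require Import Defs.
From Stdlib Require Import Classical FunctionalExtensionality PropExtensionality.
Set Implicit Arguments. Unset Strict Implicit.

Section FL.
Variable L : Frame.

Lemma le_sup (S : L -> Prop) (x : L) : S x -> fle x (fsup S).
Proof. intro H. exact (proj1 (fsup_lub S (fsup S)) (fle_refl _) x H). Qed.

Lemma sup_le (S : L -> Prop) (z : L) : (forall x, S x -> fle x z) -> fle (fsup S) z.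
Proof. intro H. exact (proj2 (fsup_lub S z) H). Qed.

Lemma meet_l (x y : L) : fle (fmeet x y) x.
Proof. exact (proj1 (proj1 (fmeet_glb x y (fmeet x y)) (fle_refl _))). Qed.
Lemma meet_r (x y : L) : fle (fmeet x y) y.
Proof. exact (proj2 (proj1 (fmeet_glb x y (fmeet x y)) (fle_refl _))). Qed.
Lemma le_meet (z x y : L) : fle z x -> fle z y -> fle z (fmeet x y).
Proof. intros; apply (proj2 (fmeet_glb x y z)); auto. Qed.

Lemma meet_comm (x y : L) : fmeet x y = fmeet y x.
Proof. apply fle_antisym; apply le_meet; (apply meet_l || apply meet_r). Qed.

Lemma meet_assoc (x y z : L) : fmeet x (fmeet y z) = fmeet (fmeet x y) z.
Proof.
  apply fle_antisym.
  - apply le_meet; [apply le_meet|].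
    + apply meet_l.
    + apply fle_trans with (fmeet y z); [apply meet_r|apply meet_l].
    + apply fle_trans with (fmeet y z); [apply meet_r|apply meet_r].
  - apply le_meet; [|apply le_meet].
    + apply fle_trans with (fmeet x y); [apply meet_l|apply meet_l].
    + apply fle_trans with (fmeet x y); [apply meet_l|apply meet_r].
    + apply meet_r.
Qed.

Lemma meet_mono (x y x' y' : L) : fle x x' -> fle y y' -> fle (fmeet x y) (fmeet x' y').
Proof.
  intros; apply le_meet.
  - apply fle_trans with x; [apply meet_l|auto].
  - apply fle_trans with y; [apply meet_r|auto].
Qed.

Lemma le_meet_eq (x y : L) : fle x y -> fmeet x y = x.
Proof. intro H. apply fle_antisym; [apply meet_l|apply le_meet; auto; apply fle_refl]. Qed.

Definition bot : L := fsup (fun _ => False).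
Lemma bot_le (x : L) : fle bot x.
Proof. apply sup_le. intros _ []. Qed.

Lemma meet_sup_le (a : L) S z : (forall s, S s -> fle (fmeet a s) z) -> fle (fmeet a (fsup S)) z.
Proof. intro H. rewrite fdistr. apply sup_le. intros w [s [Hs ->]]. auto. Qed.

Lemma fsup_ext (S T : L -> Prop) : (forall z, S z <-> T z) -> fsup S = fsup T.
Proof. intro H. f_equal. extensionality z. apply propositional_extensionality. auto. Qed.

Definition tv (P : Prop) : L := fsup (fun z => P /\ z = ftop).
Lemma tv_true P : P -> tv P = ftop.
Proof. intro HP. apply fle_antisym. apply ftop_max. apply le_sup. auto. Qed.
Lemma tv_false P : ~ P -> tv P = bot.
Proof. intro HP. apply fsup_ext. intro z; split; [intros [H _]; auto|intros []]. Qed.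
End FL.
Arguments bot {L}. Arguments tv {L} P.

Lemma hom_mono (L M : Frame) (f : L -> M) : is_frame_hom f ->
  forall x y, fle x y -> fle (f x) (f y).
Proof.
  intros [_ [Hm _]] x y H.
  assert (E : x = fmeet x y) by (symmetry; apply le_meet_eq; auto).
  rewrite E, Hm. apply meet_r.
Qed.

Lemma hom_bot (L M : Frame) (f : L -> M) : is_frame_hom f -> f bot = bot.
Proof.
  intros [_ [_ Hs]]. unfold bot. rewrite Hs. apply fsup_ext.
  intro z; split; [intros [x [[] _]]|intros []].
Qed.

Lemma hom_tv (L M : Frame) (f : L -> M) : is_frame_hom f -> forall P, f (tv P) = tv P.
Proof.
  intros Hf P. destruct (classic P) as [HP|HP].
  - rewrite !tv_true by auto. apply (proj1 Hf).
  - rewrite !tv_false by auto. apply hom_bot; auto.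
Qed.

Definition chi (A : Type) (L : Frame) (a : A) : A -> L := fun a' => tv (a' = a).
Arguments chi {A L} a.

Section Pow.
Variables (A : Type) (L M : Frame) (s : (A -> L) -> M).
Hypothesis Hs : is_frame_hom_pow s.

Lemma Dec V : s V = fsup (fun z => exists a, z = fmeet (s (chi a)) (s (fun _ => V a))).
Proof.
  assert (HV : V = psup (fun W => exists a, W = pmeet (chi a) (fun _ => V a))).
  { extensionality a'. unfold psup. apply fle_antisym.
    - apply le_sup. exists (pmeet (chi a') (fun _ => V a')). split; [exists a'; reflexivity|].
      unfold pmeet, chi. rewrite tv_true by reflexivity. rewrite meet_comm.
      symmetry; apply le_meet_eq; apply ftop_max.
    - apply sup_le. intros y [W [[a ->] ->]]. unfold pmeet, chi.
      destruct (classic (a' = a)) as [->|Hne].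
      + apply meet_r.
      + rewrite tv_false by auto. apply fle_trans with bot; [apply meet_l|apply bot_le]. }
  rewrite HV at 1. destruct Hs as [_ [Hm Hsup]]. rewrite Hsup. apply fsup_ext.
  intro z; split.
  - intros [W [[a ->] ->]]. exists a. rewrite Hm. reflexivity.
  - intros [a ->]. exists (pmeet (chi a) (fun _ => V a)). split; [exists a; reflexivity|].
    rewrite Hm. reflexivity.
Qed.

Lemma pow_bot : s (psup (fun _ => False)) = bot.
Proof.
  destruct Hs as [_ [_ Hsup]]. rewrite Hsup. apply fsup_ext.
  intro z; split; [intros [x [[] _]]|intros []].
Qed.

Lemma chi_disj a1 a2 : a1 <> a2 -> fmeet (s (chi a1)) (s (chi a2)) = bot.
Proof.
  intro Hne. destruct Hs as [Ht [Hm Hsup]]. rewrite <- Hm.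
  assert (E : pmeet (chi a1) (chi a2) = psup (fun _ : A -> L => False)).
  { extensionality a'. unfold pmeet, psup, chi.
    transitivity (@bot L).
    - destruct (classic (a' = a1)) as [->|H1].
      + rewrite (@tv_false L (a1 = a2)) by auto.
        apply fle_antisym; [apply meet_r|apply bot_le].
      + rewrite (@tv_false L (a' = a1)) by auto.
        apply fle_antisym; [apply meet_l|apply bot_le].
    - apply fsup_ext. intro z; split; [intros []|intros [x [[] _]]]. }
  rewrite E. apply pow_bot.
Qed.
End Pow.

Section Cat.
Variable C : LocCat.

Lemma L_Y (X : Frame) (B : Type) (V : B -> C1 C) (b0 : B) (p q : C1 C -> X)
  (Hq : forall x y, fle x y -> fle (q x) (q y))
  (F : (B -> C1 C) -> X) (HF : forall Y, F Y = q (Y b0)) :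
  fsup (fun z => exists x Y, isoF (Bmu V) x Y /\ z = fmeet (p x) (F Y))
  = fsup (fun z => exists x y, mu C (V b0) x y /\ z = fmeet (p x) (q y)).
Proof.
  apply fle_antisym.
  - apply sup_le. intros z [x [Y [HE ->]]]. apply le_sup. exists x, (Y b0).
    split; [exact (HE b0)|]. rewrite HF. reflexivity.
  - apply sup_le. intros z [x [y [Hm ->]]].
    set (Y := fun b => fsup (fun w => mu C (V b) x w)).
    apply fle_trans with (fmeet (p x) (F Y)).
    + apply meet_mono; [apply fle_refl|]. rewrite HF. apply Hq. unfold Y. apply le_sup. exact Hm.
    + apply le_sup. exists x, Y. split; [|reflexivity]. intro b. unfold Bmu, Y.
      destruct (mu_Cideal (V b)) as [_ [_ [H3 _]]]. apply H3. auto.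
Qed.

Lemma U_q (q : C1 C -> C0 C) (Hq : is_frame_hom q) (Hqs : forall w, q (sigma C w) = w) v :
  q v = fsup (fun z => exists x y, mu C v x y /\ z = fmeet (iota C x) (q y)).
Proof.
  transitivity (q (pairF (fun x => sigma C (iota C x)) (fun y => y) (mu C v))).
  { rewrite unit_left. reflexivity. }
  unfold pairF. destruct Hq as [_ [Hm Hs]]. rewrite Hs. apply fsup_ext. intro z; split.
  - intros [w [[x [y [H ->]]] ->]]. exists x, y. split; auto. rewrite Hm, Hqs. reflexivity.
  - intros [x [y [H ->]]]. exists (fmeet (sigma C (iota C x)) y). split.
    + exists x, y; auto.
    + rewrite Hm, Hqs; reflexivity.
Qed.

Lemma relabel (A B : Type) (s : Sec C A) (g : A -> B) V :
  bind s (fun a => ret (g a)) V = s (fun a => V (g a)).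
Proof.
  unfold bind. f_equal. extensionality a. unfold midF.
  transitivity (pairF (fun x => x) (fun y => tau C (iota C y)) (mu C (V (g a))));
    [|apply unit_right].
  exact (@L_Y (C1 C) B V (g a) (fun x => x) (fun y => tau C (iota C y))
           (fun x y H => hom_mono (tau_hom C) (hom_mono (iota_hom C) H))
           (fun Y => tau C (ret (g a) Y)) (fun Y => eq_refl)).
Qed.

Lemma iota_midF (A B : Type) (u : A -> Sec C B) E a :
  iota C (midF u E a) = fsup (fun z => exists x Y, E x Y /\ z = fmeet (iota C x) (u a Y)).
Proof.
  unfold midF. destruct (iota_hom C) as [_ [Hm Hs]]. rewrite Hs. apply fsup_ext. intro z; split.
  - intros [w [[x [Y [H ->]]] ->]]. exists x, Y. rewrite Hm, tau_iota. auto.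
  - intros [x [Y [H ->]]]. exists (fmeet x (tau C (u a Y))). split.
    + exists x, Y; auto.
    + rewrite Hm, tau_iota. reflexivity.
Qed.

Section H.
Variables (A : Type) (h : Sec C A).
Hypothesis Hh : is_frame_hom_pow h.
Hypothesis Hc : forall v, h (fun _ => v) = iota C v.

Lemma bind_h (B : Type) (u : A -> Sec C B) V :
  bind h u V = fsup (fun z => exists a, z = fmeet (h (chi a))
     (fsup (fun w => exists x Y, isoF (Bmu V) x Y /\ w = fmeet (iota C x) (u a Y)))).
Proof.
  unfold bind. rewrite (Dec Hh). apply fsup_ext; intro z.
  split; intros [a ->]; exists a; rewrite Hc, iota_midF; reflexivity.
Qed.

Lemma relabel_h (B : Type) (g : A -> B) V :
  bind h (fun a => ret (g a)) V = fsup (fun z => exists a, z = fmeet (h (chi a)) (iota C (V (g a)))).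
Proof.
  rewrite relabel. rewrite (Dec Hh (fun a => V (g a))). apply fsup_ext; intro z.
  split; intros [a ->]; exists a; rewrite Hc; reflexivity.
Qed.

Lemma cond1_gen : forall (B : Type) (b : B), sec_eq (bind h (fun _ => ret b)) (ret b).
Proof.
  intros B b V. etransitivity; [exact (relabel h (fun _ => b) V)|]. simpl. apply Hc.
Qed.

Lemma cond2_gen : sec_eq (bind h (fun a1 => bind h (fun a2 => ret (a1, a2))))
                         (bind h (fun a => ret (a, a))).
Proof.
  intro V. rewrite (relabel_h (fun a => (a, a)) V).
  assert (inner : forall a1 (Y : A * A -> C1 C), bind h (fun a2 => ret (a1, a2)) Y
            = fsup (fun z => exists a2, z = fmeet (h (chi a2)) (iota C (Y (a1, a2))))).
  { intros a1 Y. exact (relabel_h (fun a2 => (a1, a2)) Y). }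
  rewrite bind_h.
  apply fle_antisym.
  - apply sup_le. intros z [a1 ->]. apply meet_sup_le. intros s [x [Y [HE ->]]].
    rewrite inner. rewrite meet_assoc. apply meet_sup_le. intros s' [a2 ->].
    destruct (classic (a1 = a2)) as [<-|Hne].
    + apply fle_trans with (fmeet (h (chi a1)) (iota C (V (a1, a1))));
        [|apply le_sup; exists a1; reflexivity].
      apply le_meet.
      * apply fle_trans with (fmeet (h (chi a1)) (iota C x)); apply meet_l.
      * apply fle_trans with (fmeet (iota C x) (iota C (Y (a1, a1)))).
        -- apply le_meet.
           ++ apply fle_trans with (fmeet (h (chi a1)) (iota C x)); [apply meet_l|apply meet_r].
           ++ apply fle_trans with (fmeet (h (chi a1)) (iota C (Y (a1, a1)))); apply meet_r.
        -- rewrite (U_q (iota_hom C) (@sigma_iota C) (V (a1, a1))).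
           apply le_sup. exists x, (Y (a1, a1)). split; [exact (HE (a1, a1))|reflexivity].
    + apply fle_trans with bot; [|apply bot_le].
      rewrite <- (chi_disj Hh Hne). apply meet_mono.
      * apply meet_l.
      * apply meet_l.
  - apply sup_le. intros z [a ->].
    rewrite (U_q (iota_hom C) (@sigma_iota C) (V (a, a))).
    apply meet_sup_le. intros s [x [y [Hm ->]]].
    eapply fle_trans; [|apply le_sup; exists a; reflexivity].
    apply le_meet; [apply meet_l|].
    set (Y := fun p => fsup (fun w => mu C (V p) x w)).
    eapply fle_trans; [|apply le_sup; exists x, Y; split; [|reflexivity]].
    + apply le_meet.
      * apply fle_trans with (fmeet (iota C x) (iota C y)); [apply meet_r|apply meet_l].
      * rewrite inner.
        eapply fle_trans; [|apply le_sup; exists a; reflexivity].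
        apply le_meet; [apply meet_l|].
        apply fle_trans with (iota C y).
        -- apply fle_trans with (fmeet (iota C x) (iota C y)); [apply meet_r|apply meet_r].
        -- apply (hom_mono (iota_hom C)). unfold Y. apply le_sup. exact Hm.
    + intro p. unfold Bmu, Y. destruct (mu_Cideal (V p)) as [_ [_ [H3 _]]]. apply H3. auto.
Qed.

Lemma then_gen (t : Sec C A) (Ht : is_frame_hom_pow t)
  (Hts : forall w, t (fun _ => sigma C w) = w) V :
  bind h (fun a => then_ t (ret a)) V
  = fsup (fun z => exists a, z = fmeet (h (chi a)) (t (fun _ => V a))).
Proof.
  assert (Hq : is_frame_hom (fun v : C1 C => t (fun _ : A => v))).
  { destruct Ht as [H1 [H2 H3]]. split; [exact H1|split; [intros; apply H2|]].
    intro S. transitivity (fsup (img t (img (fun v (_ : A) => v) S))).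
    - rewrite <- H3. f_equal. extensionality a. unfold psup. apply fsup_ext.
      intro z; split.
      + intro Hz. exists (fun _ => z). split; [exists z; auto|reflexivity].
      + intros [W [[y [Hy ->]] ->]]. exact Hy.
    - apply fsup_ext. intro z; split.
      + intros [W [[y [Hy ->]] ->]]. exists y; auto.
      + intros [y [Hy ->]]. exists (fun _ => y). split; [exists y; auto|reflexivity]. }
  assert (inner : forall a, fsup (fun w => exists x Y, isoF (Bmu V) x Y /\
                      w = fmeet (iota C x) (then_ t (ret a) Y)) = t (fun _ => V a)).
  { intro a.
    transitivity (fsup (fun z => exists x y, mu C (V a) x y /\
                     z = fmeet (iota C x) (t (fun _ => y)))).
    - exact (@L_Y (C0 C) A V a (iota C) (fun v => t (fun _ => v))
               (hom_mono Hq) (fun Y => then_ t (ret a) Y)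
               (fun Y => relabel t (fun _ => a) Y)).
    - symmetry. exact (U_q Hq Hts (V a)). }
  rewrite bind_h. apply fsup_ext; intro z. split; intros [a ->]; exists a; rewrite inner; reflexivity.
Qed.
End H.
End Cat.

Theorem proposition5p3 (C : LocCat) : hyperaffine_unary C.
Proof.
  unfold hyperaffine_unary. intros A t [Ht Hts].
  set (tb := fun V : A -> C1 C => t (fun a => sigma C (iota C (V a)))).
  assert (tb_hom : is_frame_hom_pow tb).
  { destruct Ht as [H1 [H2 H3]].
    destruct (sigma_hom C) as [S1 [S2 S3]]. destruct (iota_hom C) as [I1 [I2 I3]].
    split; [|split].
    - unfold tb, ptop. rewrite <- H1. f_equal. extensionality a. rewrite I1, S1. reflexivity.
    - intros V W. unfold tb. rewrite <- H2. f_equal. extensionality a. unfold pmeet.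
      rewrite I2, S2. reflexivity.
    - intro S. unfold tb.
      transitivity (fsup (img t (img (fun V (a : A) => sigma C (iota C (V a))) S))).
      + rewrite <- H3. f_equal.
        extensionality a. unfold psup. rewrite I3, S3. apply fsup_ext. intro z; split.
        * intros [w [[y [[V [HV ->]] ->]] ->]].
          exists (fun a => sigma C (iota C (V a))). split; [|reflexivity].
          exists V; auto.
        * intros [W [[V [HV ->]] ->]]. exists (iota C (V a)). split; [|reflexivity].
          exists (V a). split; [|reflexivity]. exists V; auto.
      + apply fsup_ext. intro z; split.
        * intros [W [[V [HV ->]] ->]]. exists V; auto.
        * intros [V [HV ->]]. exists (fun a => sigma C (iota C (V a))). split; [exists V; auto|reflexivity]. }
  assert (tb_const : forall v, tb (fun _ => v) = iota C v).
  { intro v. unfold tb. apply Hts. }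
  assert (tb_chi : forall a, tb (chi a) = t (chi a)).
  { intro a. unfold tb. f_equal. extensionality a'. unfold chi.
    rewrite (hom_tv (iota_hom C)), (hom_tv (sigma_hom C)). reflexivity. }
  exists tb. split; [split; [|split]|].
  - split; [exact tb_hom|]. intro w. unfold tb. rewrite sigma_iota. apply Hts.
  - split.
    + exact (cond1_gen tb_const).
    + exact (cond2_gen tb_hom tb_const).
  - intro V. rewrite (then_gen tb_hom tb_const Ht Hts V).
    rewrite (Dec Ht V). apply fsup_ext; intro z.
    split; intros [a ->]; exists a; rewrite tb_chi; reflexivity.
  - intros tb' [Hh' _] [c1 _] Heq.
    assert (Hc' : forall v, tb' (fun _ => v) = iota C v).
    { intro v. pose proof (c1 unit tt (fun _ => v)) as H. simpl in H. unfold ret in H.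
      rewrite <- H. symmetry. exact (relabel tb' (fun _ => tt) (fun _ => v)). }
    assert (Hchi : forall a, tb' (chi a) = t (chi a)).
    { intro a. rewrite (Heq (chi a)).
      rewrite (then_gen Hh' Hc' Ht Hts (chi a)).
      apply fle_antisym.
      - apply le_sup. exists a. unfold chi. rewrite tv_true by reflexivity.
        rewrite <- (proj1 (sigma_hom C)). rewrite Hts.
        symmetry. apply le_meet_eq. apply ftop_max.
      - apply sup_le. intros z [a' ->]. unfold chi at 2.
        rewrite <- (hom_tv (sigma_hom C)). rewrite Hts.
        destruct (classic (a' = a)) as [->|Hne].
        + apply meet_l.
        + rewrite tv_false by auto. apply fle_trans with bot; [apply meet_r|apply bot_le]. }
    intro V. rewrite (Dec Hh' V), (Dec tb_hom V). apply fsup_ext; intro z.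
    split; intros [a ->]; exists a; rewrite Hc', tb_const, Hchi, tb_chi; reflexivity.
Qed.
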